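(* Let $a\in[0,\infty)$ and let $\theta:[0,1]\to[0,\infty]$ be a continuous and strictly decreasing function such that (1) $\theta(x)=\infty$ if and only if $x=0$, and (2) $\theta(x)=\frac{a}{2}$ if and only if $x=1$. Let $\vartheta:[0,\infty]\to[0,1]$ be given by $\vartheta(x)=(\theta+\frac{a}{2})^{(-1)}(x)$ for all $x\in[0,\infty]$. Then the function $O_{\theta,\vartheta}:[0,1]^2\to[0,1]$, $O_{\theta,\vartheta}(x,y)=\vartheta(\theta(x)+\theta(y))$, is a positive t-norm.
   Context: Arithmetic in $[0,\infty]$ uses $c+\infty=\infty$. The function $\theta+\frac{a}{2}:[0,1]\to[0,\infty]$ is $x\mapsto\theta(x)+\frac a2$. For a decreasing function $f:[0,1]\to[0,\infty]$, its pseudo-inverse $f^{(-1)}:[0,\infty]\to[0,1]$ is $f^{(-1)}(y)=\sup\{x\in[0,1]\mid f(x)>y\}$ (with $\sup\emptyset=0$). A t-norm is a commutative, associative map $T:[0,1]^2\to[0,1]$, increasing in each variable, with $T(x,1)=x$ for all $x$; it is positive if $T(x,y)=0$ implies $x=0$ or $y=0$. *)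

(* Defs.v *)
From mathcomp Require Import all_boot all_order all_algebra.
From mathcomp Require Import all_classical all_reals all_analysis.
Set Implicit Arguments. Unset Strict Implicit. Unset Printing Implicit Defensive.
Import Order.TTheory GRing.Theory Num.Theory.
Local Open Scope classical_set_scope.
Local Open Scope ring_scope.

(* Pseudo-inverse of a (decreasing) function f : [0,1] -> [0,oo]:
   f^(-1)(y) = sup {x in [0,1] | f x > y}, with sup of the empty set = 0
   (MathComp's [sup] satisfies [sup set0 = 0], lemma [sup0]). *)
Definition pseudo_inv {R : realType} (f : R -> \bar R) (y : \bar R) : R :=
  sup [set x : R | x \in `[0, 1] /\ (y < f x)%E].

Definition is_tnorm {R : realType} (T : R -> R -> R) : Prop :=
  (forall x y, x \in `[0, 1] -> y \in `[0, 1] -> T x y \in `[0, 1]) /\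
  [/\      (forall x y, x \in `[0, 1] -> y \in `[0, 1] -> T x y = T y x),
      (forall x y z, x \in `[0, 1] -> y \in `[0, 1] -> z \in `[0, 1] ->
          T x (T y z) = T (T x y) z),
      (forall x x' y, x \in `[0, 1] -> x' \in `[0, 1] -> y \in `[0, 1] ->
          x <= x' -> T x y <= T x' y),
      (forall x y y', x \in `[0, 1] -> y \in `[0, 1] -> y' \in `[0, 1] ->
          y <= y' -> T x y <= T x y') &
      (forall x, x \in `[0, 1] -> T x 1 = x)].

Definition is_positive_tnorm {R : realType} (T : R -> R -> R) : Prop :=
  is_tnorm T /\
  (forall x y, x \in `[0, 1] -> y \in `[0, 1] -> T x y = 0 -> x = 0 \/ y = 0).

(* Main.v *)
Require Import Defs.
From mathcomp Require Import all_boot all_order all_algebra.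
From mathcomp Require Import all_classical all_reals all_analysis.
Import Order.TTheory GRing.Theory Num.Theory.
Local Open Scope classical_set_scope.
Local Open Scope ring_scope.
Import numFieldNormedType.Exports.

Theorem proposition4p2 (R : realType) (a : R) (theta : R -> \bar R) :
  0 <= a ->
  {within `[0, 1], continuous theta} ->
  (forall x, x \in `[0, 1] -> (0 <= theta x)%E) ->
  (forall x y, x \in `[0, 1] -> y \in `[0, 1] -> x < y -> (theta y < theta x)%E) ->
  (forall x, x \in `[0, 1] -> (theta x = +oo)%E <-> x = 0) ->
  (forall x, x \in `[0, 1] -> (theta x = (a / 2)%:E)%E <-> x = 1) ->
  let vartheta := pseudo_inv (fun x => (theta x + (a / 2)%:E)%E) in
  is_positive_tnorm (fun x y => vartheta (theta x + theta y)%E).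
Proof.
move=> a0 ct pos dec inf1 half vt.
have I0 : (0:R) \in `[0, 1] by rewrite in_itv /= lexx ler01.
have I1 : (1:R) \in `[0, 1] by rewrite in_itv /= lexx ler01.
have ha : ((a / 2)%:E : \bar R) \is a fin_num by [].
have decl : forall x y, x \in `[0, 1] -> y \in `[0, 1] -> (theta y < theta x)%E -> x < y.
  move=> x y xI yI h; case: (ltgtP x y) => // [yx|xy].
    by have := dec _ _ yI xI yx; rewrite lt_neqAle => /andP[_]; rewrite leNgt h.
  by move: h; rewrite xy ltxx.
have decle : forall x y, x \in `[0, 1] -> y \in `[0, 1] -> x <= y -> (theta y <= theta x)%E.
  move=> x y xI yI; rewrite le_eqVlt => /orP[/eqP->//|xy].
  exact/ltW/dec.
have inj : forall x y, x \in `[0, 1] -> y \in `[0, 1] -> theta x = theta y -> x = y.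
  move=> x y xI yI h; case: (ltgtP x y) => // xy.
    by have := dec _ _ xI yI xy; rewrite h ltxx.
  by have := dec _ _ yI xI xy; rewrite h ltxx.
have A : forall c, c \in `[0, 1] -> vt (theta c + (a / 2)%:E)%E = c.
  move=> c cI; rewrite /vt /pseudo_inv.
  have -> : [set x | x \in `[0, 1] /\ (theta c + (a / 2)%:E < theta x + (a / 2)%:E)%E]
       = [set` `[0, c[].
    apply/seteqP; split => z /=.
      rewrite lteD2rE // => -[zI /(decl _ _ zI cI) zc].
      by move: zI; rewrite !in_itv /= zc => /andP[-> _].
    rewrite in_itv /= => /andP[z0 zc]; rewrite lteD2rE //.
    have zI : z \in `[0, 1].
      by move: cI; rewrite !in_itv /= z0 => /andP[_]; apply: le_trans (ltW zc).
    by split => //; apply: dec.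
  move: cI; rewrite in_itv /= => /andP[]; rewrite le_eqVlt => /orP[/eqP<- _|c0 _].
    rewrite (_ : [set` _] = set0) ?sup0 //.
    by apply/seteqP; split => z //=; rewrite in_itv /= => /andP[/le_lt_trans h/h]; rewrite ltxx.
  by rewrite sup_itv // bnd_simp.
have fin : forall z, z \in `[0, 1] -> z != 0 -> theta z \is a fin_num.
  move=> z zI z0; rewrite fin_numE; apply/andP; split.
    by apply: contraTneq (pos z zI) => ->.
  by apply/eqP => /(inf1 z zI) /eqP; rewrite (negbTE z0).
have ninf : forall z, z \in `[0, 1] -> theta z != -oo%E.
  by move=> z zI; apply: contraTneq (pos z zI) => ->.
have th0 : theta 0 = +oo%E by apply/(inf1 0 I0).
have th1 : theta 1 = (a / 2)%:E by apply/(half 1 I1).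
have geh : forall z, z \in `[0, 1] -> ((a / 2)%:E <= theta z)%E.
  move=> z zI; rewrite -th1; apply: decle => //.
  by move: zI; rewrite in_itv /= => /andP[].
have B : forall x y, x \in `[0, 1] -> y \in `[0, 1] ->
    exists2 c, c \in `[0, 1] & (theta c + (a / 2)%:E = theta x + theta y)%E.
  move=> x y xI yI.
  have [->|x0] := eqVneq x 0.
    by exists 0 => //; rewrite th0 !addye // ninf.
  have [->|y0] := eqVneq y 0.
    by exists 0 => //; rewrite th0 addye // addey // ninf.
  set rx := fine (theta x); set ry := fine (theta y).
  have ex : theta x = rx%:E by rewrite fineK // fin.
  have ey : theta y = ry%:E by rewrite fineK // fin.
  have hx : a / 2 <= rx by rewrite -lee_fin -ex geh.
  have hy : a / 2 <= ry by rewrite -lee_fin -ey geh.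
  set s := rx + ry - a / 2.
  have hs : rx <= s by rewrite /s -addrA lerDl subr_ge0.
  suff : exists2 c, c \in `[0, 1] & theta c = s%:E.
    by case=> c cI cs; exists c => //; rewrite cs ex ey -EFinD /s subrK.
  have : exists e, [/\ e \in `[0, 1], 0 < e & (s%:E < theta e)%E].
    have := (subspace_continuousP _ _).1 ct 0 I0.
    rewrite /from_subspace th0 => /cvgeyPgt/(_ s).
    rewrite near_withinE => /nbhs_ballP[d /= d0 hd].
    have e0 : 0 < Num.min (d / 2) 1 by rewrite lt_min ltr01 andbT divr_gt0.
    have eI : Num.min (d / 2) 1 \in `[0, 1] by rewrite in_itv /= ge_min lexx orbT andbT ltW.
    exists (Num.min (d / 2) 1); split => //; apply: hd => //.
    rewrite /ball /= sub0r normrN ger0_norm ?ltW //.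
    have dd : d / 2 < d by rewrite ltr_pdivrMr // ltr_pMr // ltr1n.
    by apply: le_lt_trans dd; rewrite ge_min lexx.
  case=> e [eI e0 es].
  have e1 : e <= 1 by move: eI; rewrite in_itv /= => /andP[].
  have sub : `[e, 1] `<=` `[0, 1].
    move=> z /=; rewrite !in_itv /= => /andP[ez ->]; rewrite andbT.
    exact: le_trans (ltW e0) ez.
  have Hc : {within `[e, 1], continuous (fun z => fine (theta z))}.
    apply/(@subspace_continuousP R) => z zin.
    have zI : z \in `[0, 1] by have := sub z zin.
    have z0 : z != 0.
      by move: zin; rewrite /= in_itv /= => /andP[ez _]; apply: lt0r_neq0; apply: lt_le_trans ez.
    have := (subspace_continuousP _ _).1 (continuous_subspaceW sub ct) z zin.
    by rewrite /from_subspace -(fineK (fin z zI z0)) => /fine_cvg.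
  have Hb : Num.min (fine (theta e)) (fine (theta 1)) <= s <= Num.max (fine (theta e)) (fine (theta 1)).
    apply/andP; split.
      by rewrite ge_min; apply/orP; right; rewrite th1 /=; apply: le_trans hs.
    rewrite le_max; apply/orP; left; apply/ltW.
    by rewrite -lte_fin fineK // fin // lt0r_neq0.
  have [c cin fc] := @IVT R (fun z => fine (theta z)) e 1 s e1 Hc Hb.
  have cI : c \in `[0, 1] by apply: sub.
  have c0 : c != 0.
    by move: cin; rewrite in_itv /= => /andP[ez _]; apply: lt0r_neq0; apply: lt_le_trans ez.
  by exists c => //; rewrite -fc fineK // fin.
have O : forall x y, x \in `[0, 1] -> y \in `[0, 1] ->
    vt (theta x + theta y)%E \in `[0, 1] /\
    (theta (vt (theta x + theta y)%E) + (a / 2)%:E = theta x + theta y)%E.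
  by move=> x y xI yI; have [c cI <-] := B x y xI yI; rewrite A.
have ginj : forall c d, c \in `[0, 1] -> d \in `[0, 1] ->
    (theta c + (a / 2)%:E = theta d + (a / 2)%:E)%E -> c = d.
  move=> c d cI dI h; apply: inj => //.
  by rewrite -(@addeK _ (a / 2)%:E (theta c)) // h addeK.
have gmono : forall c d, c \in `[0, 1] -> d \in `[0, 1] ->
    (theta d + (a / 2)%:E <= theta c + (a / 2)%:E)%E -> c <= d.
  move=> c d cI dI h; rewrite leNgt; apply/negP => dc.
  have := dec _ _ dI cI dc; rewrite -(@lteD2rE _ (a / 2)%:E) // => /(le_lt_trans h).
  by rewrite ltxx.
split; [split|].
- by move=> x y xI yI; exact: (O x y xI yI).1.
- split.
  + by move=> x y _ _; rewrite addeC.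
  + move=> x y z xI yI zI.
    move: (vt (theta y + theta z)%E) (O y z yI zI) => u [uI hu].
    have [vI hv] := O x y xI yI.
    move: (vt (theta x + theta y)%E) vI hv => v vI hv.
    have [LI hL] := O x u xI uI; have [RI hR] := O v z vI zI.
    apply: ginj => //; rewrite hL hR.
    rewrite -(@addeK _ (a / 2)%:E (theta x + theta u)) //.
    rewrite -(@addeK _ (a / 2)%:E (theta v + theta z)) //.
    by rewrite -(addeA (theta x) (theta u)) hu (addeAC (theta v)) hv addeA.
  + move=> x x' y xI x'I yI xx'.
    have [_ h1] := O x y xI yI; have [_ h2] := O x' y x'I yI.
    apply: gmono; rewrite ?(O x y xI yI).1 ?(O x' y x'I yI).1 // h1 h2.
    by apply: leeD2r; exact: decle.
  + move=> x y y' xI yI y'I yy'.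
    have [_ h1] := O x y xI yI; have [_ h2] := O x y' xI y'I.
    apply: gmono; rewrite ?(O x y xI yI).1 ?(O x y' xI y'I).1 // h1 h2.
    by apply: leeD2l; exact: decle.
  + by move=> x xI; rewrite th1 A.
- move=> x y xI yI h0.
  have [_ hO] := O x y xI yI; rewrite h0 th0 addye // in hO.
  have [->|x0] := eqVneq x 0; first by left.
  have [->|y0] := eqVneq y 0; first by right.
  have : (theta x + theta y)%E \is a fin_num by rewrite fin_numD !fin.
  by rewrite -hO.
Qed.
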